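(* Let $F$ be an isotropic random field on $\mathcal S^N$ that is almost surely continuous, and let $\mathbf n=(\sqrt N,0,\dots,0)$. Suppose: (1) for every $c>0$ there is $c_1(c)>0$ such that for every $\delta>0$, $\mathbb P(|F(\mathbf n)-\mathbb E F(\mathbf n)|\ge cN^{1/2+\delta})\lesssim e^{-c_1N^{1+2\delta}}$; (2) there is $\alpha>0$ and for every $c>0$ a $c_2(c)>0$ such that for every $\delta>0$, $\mathbb P(\sup_{x,y:R(x,y)\ge1-N^{-\alpha}}|F(x)-F(y)|\ge cN^{1/2+\delta})\lesssim e^{-c_2N^{1+2\delta}}$. Then for every $c>0$ there is $f(c)>0$ (depending on $c_1,c_2$) such that for every $\delta>0$, $\mathbb P(\sup_{x\in\mathcal S^N}|F(x)-\mathbb E F(\mathbf n)|\ge cN^{1/2+\delta})\lesssim e^{-f(c)N^{1+2\delta}}$. Moreover, if $F\ge0$ almost surely, $\mathbb EF(\mathbf n)=O(\sqrt N)$, (1) holds, and (2) is replaced by (2'): there is $\alpha>0$ and for every $c>0$ a $c_2(c)>0$ such that for every $\delta>0$, $\mathbb P(\sup_{x,y:R(x,y)\ge1-N^{-\alpha}}|F^2(x)-F^2(y)|\ge cN^{1+2\delta})\lesssim e^{-c_2N^{1+2\delta}}$, then for every $c>0$ there is $f(c)>0$ such that for every $\delta>0$, $\mathbb P(\sup_{x\in\mathcal S^N}F(x)\ge cN^{1/2+\delta})\lesssim e^{-f(c)N^{1+2\delta}}$.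
   Context: $\mathcal S^N=\{x\in\mathbb R^N:\sum x_i^2=N\}$; $R(x,y)=\frac1N\sum_ix_iy_i$ is the normalized overlap. A random field on $\mathcal S^N$ is isotropic if its law is invariant under orthogonal transformations of $\mathbb R^N$. The symbol $\lesssim$ means inequality up to a constant independent of $N$. *)

(* Defs.v *)
From HB Require Import structures.
From mathcomp Require Import all_boot all_order all_algebra.
From mathcomp Require Import all_classical all_reals all_analysis.
Set Implicit Arguments. Unset Strict Implicit. Unset Printing Implicit Defensive.
Import Order.TTheory GRing.Theory Num.Theory.
Import numFieldNormedType.Exports.
Local Open Scope classical_set_scope.
Local Open Scope ring_scope.

Section Defs.
Variable R : realType.

Definition sphere (N : nat) : set 'rV[R]_N :=
  [set x | \sum_(i < N) (x ord0 i) ^+ 2 = N%:R].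

Arguments sphere : clear implicits.
Definition overlap (N : nat) (x y : 'rV[R]_N) : R :=
  (\sum_(i < N) x ord0 i * y ord0 i) / N%:R.

Definition npole (N : nat) : 'rV[R]_N :=
  \row_(i < N) (if val i == 0%N then Num.sqrt (N%:R) else 0).

Arguments npole : clear implicits.
Definition orthogonal_mx (N : nat) (O : 'M[R]_N) : Prop :=
  O *m O^T = 1%:M.

Variables (d : measure_display) (T : measurableType d) (P : probability T R).

Definition outerP (A : set T) : \bar R :=
  ereal_inf [set P B | B in [set B | measurable B /\ A `<=` B]].

Definition random_field (N : nat) (F : 'rV[R]_N -> T -> R) : Prop :=
  forall x, sphere N x -> measurable_fun setT (F x).

(* isotropy: every finite-dimensional distribution of the field is invariant
   under every orthogonal transformation (checked on products of Borel sets,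
   which determine the joint law) *)
Definition isotropic (N : nat) (F : 'rV[R]_N -> T -> R) : Prop :=
  forall (O : 'M[R]_N), orthogonal_mx O ->
  forall (k : nat) (xs : 'I_k -> 'rV[R]_N) (Bs : 'I_k -> set R),
    (forall i, sphere N (xs i)) -> (forall i, measurable (Bs i)) ->
    P [set w | forall i, Bs i (F (xs i *m O) w)] =
    P [set w | forall i, Bs i (F (xs i) w)].

Definition as_continuous (N : nat) (F : 'rV[R]_N -> T -> R) : Prop :=
  {ae P, forall w, {within sphere N, continuous (fun x => F x w)}}.

Definition mean_pole (N : nat) (F : 'rV[R]_N -> T -> R) : R :=
  fine (\int[P]_w (F (npole N) w)%:E).

Definition sup_sphere (N : nat) (g : 'rV[R]_N -> T -> R) (w : T) : \bar R :=
  ereal_sup [set (g x w)%:E | x in sphere N].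

Definition sup_close (N : nat) (alpha : R) (g : 'rV[R]_N -> T -> R) (w : T)
  : \bar R :=
  ereal_sup [set (`|g xy.1 w - g xy.2 w|)%:E | xy in
     [set xy | sphere N xy.1 /\ sphere N xy.2 /\
               1 - (N%:R `^ (- alpha)) <= overlap xy.1 xy.2]].
End Defs.
Arguments sphere {R} N _.
Arguments npole {R} N.

(* Main.v *)
Require Import Defs.
From HB Require Import structures.
From mathcomp Require Import all_boot all_order all_algebra.
From mathcomp Require Import all_classical all_reals all_analysis.
From mathcomp Require Import ring lra zify.
Import Order.TTheory GRing.Theory Num.Theory.
Import numFieldNormedType.Exports.
Local Open Scope classical_set_scope.
Local Open Scope ring_scope.

Section OP.
Variables (R : realType) (d : measure_display) (T : measurableType d) (P : probability T R).

Lemma outerP_le1 A : (outerP P A <= 1)%E.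
Proof.
apply: ereal_inf_lbound; exists setT => //; last exact: probability_setT.

Qed.

Lemma outerP_ge0 A : (0 <= outerP P A)%E.
Proof. by apply: le_ereal_inf_tmp => _ [B _ <-]. Qed.

Lemma outerP_fin A : outerP P A \is a fin_num.
Proof.
by rewrite ge0_fin_numE ?outerP_ge0 // (le_lt_trans (outerP_le1 _)) ?ltry.
Qed.

Lemma P_fin (A : set T) : measurable A -> P A \is a fin_num.
Proof.
by move=> mA; rewrite ge0_fin_numE // (le_lt_trans (probability_le1 _ mA)) ?ltry.
Qed.

Lemma P_le_outerP A : measurable A -> (P A <= outerP P A)%E.
Proof.
move=> mA; apply: le_ereal_inf_tmp => _ [B [mB AB] <-].
by apply: le_measure => //; rewrite inE.
Qed.

Lemma outerP_split A U B : measurable U -> A `<=` U `|` B ->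
  (outerP P A <= P U + outerP P B)%E.
Proof.
move=> mU AUB.
rewrite addeC -lee_subel_addr //.
apply: le_ereal_inf_tmp => _ [B' [mB' BB'] <-].
rewrite lee_subel_addr //.
apply: (@le_trans _ _ (P (U `|` B'))).
  apply: ereal_inf_lbound; exists (U `|` B') => //; split; first exact: measurableU.
  by move=> x /AUB [?|/BB' ?]; [left|right].
by rewrite addeC; apply: measureU2.
exact: P_fin. exact: outerP_fin.
Qed.

Lemma union_bound (I : eqType) (s : seq I) (A : I -> set T) (b : R) :
  (forall i, i \in s -> measurable (A i) /\ (P (A i) <= b%:E)%E) ->
  measurable (\big[setU/set0]_(i <- s) A i) /\
  (P (\big[setU/set0]_(i <- s) A i) <= ((size s)%:R * b)%:E)%E.
Proof.
elim: s => [|i s IH] hA.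
  by rewrite big_nil measure0 mul0r; split.
have [ms Ps] := IH (fun j js => hA j (ltac:(by rewrite in_cons js orbT))).
have [mi Pi] := hA i (mem_head _ _).
rewrite big_cons; split; first exact: measurableU.
apply: le_trans (measureU2 _ mi ms) _.
rewrite /= -addn1 natrD mulrDl mul1r addrC EFinD.
exact: leeD.
Qed.

Lemma in_union (I : eqType) (s : seq I) (A : I -> set T) i w :
  i \in s -> A i w -> (\big[setU/set0]_(j <- s) A j) w.
Proof.
elim: s => // j s IH; rewrite in_cons big_cons => /orP[/eqP<-|/IH h] Aw.
  by left. by right; apply: h.
Qed.

Lemma ev_unif (S : nat -> set T) (f g C0 : R) (N0 : nat) :
  0 <= f -> 0 <= g ->
  (forall N, (N0 <= N)%N -> (0 < N)%N ->
     (outerP P (S N) <= (C0 * expR (- f * N%:R `^ g))%:E)%E) ->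
  exists C : R, forall N, (0 < N)%N ->
     (outerP P (S N) <= (C * expR (- f * N%:R `^ g))%:E)%E.
Proof.
move=> f0 g0 H.
exists (Num.max C0 (expR (f * N0%:R `^ g))) => N N0'.
case: (leqP N0 N) => hN.
  apply: (le_trans (H N hN N0')); rewrite lee_fin ler_wpM2r ?expR_ge0 //.
  by rewrite le_max lexx.
apply: (le_trans (outerP_le1 _)); rewrite lee_fin.
apply: (@le_trans _ _ (expR (f * N0%:R `^ g) * expR (- f * N%:R `^ g))); last first.
  by rewrite ler_wpM2r ?expR_ge0 // le_max lexx orbT.
rewrite -expRD; apply: le_trans (expR_ge1Dx _); rewrite lerDl mulNr subr_ge0 ler_wpM2l //.
by apply: ge0_ler_powR => //; rewrite ?nnegrE ?ler0n // ler_nat ltnW.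
Qed.

End OP.

Section Asy.
Variable R : realType.

Lemma ev_pow (dl U : R) : 0 < dl -> exists N0 : nat, forall N : nat, (N0 <= N)%N ->
  U <= N%:R `^ dl.
Proof.
move=> dl0; set V := Num.max U 0.
have V0 : 0 <= V by rewrite le_max lexx orbT.
have W0 : 0 <= V `^ dl^-1 by apply: powR_ge0.
exists (Num.Def.archi_bound (V `^ dl^-1)) => N hN.
have h1 : V `^ dl^-1 <= N%:R.
  apply: (le_trans (ltW (archi_boundP W0))); by rewrite ler_nat.
apply: (@le_trans _ _ V); first by rewrite le_max lexx.
have -> : V = (V `^ dl^-1) `^ dl by rewrite -powRrM mulVf ?gt_eqF // powRr1.
by apply: ge0_ler_powR => //; rewrite ?ltW // nnegrE // (le_trans W0 h1).
Qed.

Lemma ev_count (c dl : R) (B : nat) : 0 < c -> 0 < dl ->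
  exists N0 : nat, forall N : nat, (N0 <= N)%N -> (0 < N)%N ->
  forall L : nat, (L <= 7 * N ^ B)%N ->
  L%:R ^+ N <= expR (c * N%:R `^ (1 + 2 * dl)).
Proof.
move=> c0 dl0.
set K := (ln 7 + B%:R / dl) / c.
have [N0 HN0] := @ev_pow dl (Num.max 1 K) dl0.
exists N0 => N hN N0' L hL.
have u1 := HN0 N hN; set u := N%:R `^ dl in u1.
have Nr0 : (0 : R) < N%:R by rewrite ltr0n.
have u1' : 1 <= u by rewrite (le_trans _ u1) // le_max lexx.
have uK : K <= u by rewrite (le_trans _ u1) // le_max lexx orbT.
have e1 : N%:R `^ (1 + 2 * dl) = N%:R * u ^+ 2.
  rewrite powRD; last by apply/implyP => _; rewrite gt_eqF.
  rewrite powRr1 ?ler0n //; congr (_ * _).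
  by rewrite mulrC powRrM -/u powR_mulrn // (le_trans ler01 u1').
rewrite e1 mulrA [c * _]mulrC -mulrA expRM_natl.
have hL7 : (L%:R : R) <= 7 * N%:R ^+ B.
  by rewrite -natrX -natrM ler_nat.
case: (posnP L) => [->|L0].
  by rewrite expr0n gtn_eqF //= exprn_ge0 // expR_ge0.
apply: lerXn2r; rewrite ?nnegrE ?ler0n ?expR_ge0 //.
apply: (le_trans hL7).
have p7 : (0 : R) < 7 * N%:R ^+ B by rewrite mulr_gt0 ?exprn_gt0.
rewrite -(lnK (x := 7 * N%:R ^+ B)) ?posrE // ler_expR.
rewrite lnM ?posrE ?exprn_gt0 // lnXn //.
have lnN : ln (N%:R : R) * dl <= u.
  by rewrite mulrC -ln_powR ltW // ln_sublinear // powR_gt0.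
have lnN' : ln (N%:R : R) *+ B <= B%:R / dl * u.
  have lnN2 : ln (N%:R : R) <= u / dl by rewrite ler_pdivlMr.
  have -> : B%:R / dl * u = B%:R * (u / dl) by rewrite mulrAC -mulrA.
  by rewrite -[_ *+ B]mulr_natl ler_wpM2l ?ler0n.
apply: (le_trans (lerD (lexx _) lnN')).
have cK : c * K = ln 7 + B%:R / dl by rewrite /K mulrC divfK ?gt_eqF.
have l7 : 0 <= ln (7 : R) by apply: ln_ge0; rewrite ler1n.
have Bd : 0 <= B%:R / dl by rewrite divr_ge0 ?ler0n ?ltW.
apply: (@le_trans _ _ (c * K * u)).
  rewrite cK mulrDl lerD2r.
  by rewrite ler_peMr.
  rewrite -mulrA; apply: ler_wpM2l; first exact: ltW.
  by rewrite expr2 ler_wpM2r // (le_trans ler01 u1').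
Qed.

End Asy.

Set Implicit Arguments. Unset Strict Implicit.

Section HH.
Variable R : realType.

Definition dot {N : nat} (u v : 'rV[R]_N) := \sum_(i < N) u ord0 i * v ord0 i.

Lemma dotC N (u v : 'rV[R]_N) : dot u v = dot v u.
Proof. by apply: eq_bigr => i _; rewrite mulrC. Qed.

Lemma dotBl N (u v w : 'rV[R]_N) : dot (u - v) w = dot u w - dot v w.
Proof. by rewrite /dot -sumrB; apply: eq_bigr => i _; rewrite !mxE mulrBl. Qed.

Lemma dotBr N (u v w : 'rV[R]_N) : dot w (u - v) = dot w u - dot w v.
Proof. by rewrite dotC dotBl !(dotC w). Qed.

Lemma dotZl N a (u w : 'rV[R]_N) : dot (a *: u) w = a * dot u w.
Proof. by rewrite /dot mulr_sumr; apply: eq_bigr => i _; rewrite !mxE mulrA. Qed.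

Lemma dotZr N a (u w : 'rV[R]_N) : dot w (a *: u) = a * dot w u.
Proof. by rewrite dotC dotZl dotC. Qed.

Lemma sphere_dot N (x : 'rV[R]_N) : sphere N x <-> dot x x = N%:R.
Proof.
rewrite /sphere /dot /=.
by rewrite (eq_bigr (fun i => x ord0 i * x ord0 i)) // => i _; rewrite expr2.
Qed.

Lemma dot_ge0 N (x : 'rV[R]_N) : 0 <= dot x x.
Proof. by apply: sumr_ge0 => i _; rewrite -expr2 sqr_ge0. Qed.

Lemma npole_sphere N : (0 < N)%N -> sphere N (npole N : 'rV[R]_N).
Proof.
case: N => // N _; rewrite /sphere /= big_ord_recl /= !mxE /=.
rewrite sqr_sqrtr ?ler0n // big1 ?addr0 // => i _.
by rewrite !mxE /= expr0n.
Qed.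

Lemma dot0 N (v : 'rV[R]_N) : dot v v = 0 -> forall j, v ord0 j = 0.
Proof.
move=> h j; have /psumr_eq0P h2 := h.
have := h2 (fun i _ => ltac:(by rewrite -expr2 sqr_ge0)) j isT.
by rewrite -expr2 => /eqP; rewrite sqrf_eq0 => /eqP.
Qed.

Lemma vvT N (v : 'rV[R]_N) : v *m v^T = (dot v v)%:M.
Proof.
rewrite [LHS]mx11_scalar; congr (_%:M).
by rewrite !mxE; apply: eq_bigr => i _; rewrite !mxE.
Qed.

Lemma householder N (y : 'rV[R]_N) : (0 < N)%N -> sphere N y ->
  exists O : 'M[R]_N, orthogonal_mx O /\ npole N *m O = y.
Proof.
move=> N0 /sphere_dot yy.
have /sphere_dot nn := npole_sphere N0.
set n := npole N in nn *.
set v := n - y.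
have vv : dot v v = 2 * (N%:R - dot n y).
  by rewrite /v !dotBl !dotBr nn yy (dotC y n); ring.
have nv : dot n v = N%:R - dot n y by rewrite /v dotBr nn.
have [v0|v0] := eqVneq (dot v v) 0.
  exists 1%:M; split; first by rewrite /orthogonal_mx trmx1 mulmx1.
  rewrite mulmx1; apply/eqP; rewrite -subr_eq0; apply/eqP.
  apply/matrixP => i j; rewrite !mxE [i]ord1.
  have := dot0 v0 j; rewrite /v !mxE; exact.
set s := dot v v.
set Q := v^T *m v.
exists (1%:M - (2 / s) *: Q); split.
  have QT : Q^T = Q by rewrite /Q trmx_mul trmxK.
  have OT : (1%:M - (2 / s) *: Q)^T = 1%:M - (2 / s) *: Q.
    rewrite raddfB /= trmx1 -{2}QT; congr (_ - _); apply/matrixP => i j; rewrite !mxE. by [].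
  have QQ : Q *m Q = s *: Q.
    by rewrite /Q mulmxA -(mulmxA v^T) vvT mul_mx_scalar -scalemxAl.
  rewrite /orthogonal_mx OT.
  rewrite mulmxBl !mulmxBr mulmx1 !mul1mx -!scalemxAl -!scalemxAr QQ !scalerA.
  have as2 : 2 / s * (2 / s) * s = 2 * (2 / s) by field.
  rewrite as2 mulmx1; apply/matrixP => i j; rewrite !mxE; ring.
rewrite mulmxBr mulmx1 -scalemxAr /Q mulmxA.
have -> : n *m v^T = (dot n v)%:M.
  rewrite [LHS]mx11_scalar; congr (_%:M).
  by rewrite !mxE; apply: eq_bigr => i _; rewrite !mxE.
rewrite mul_scalar_mx scalerA.
have h : N%:R - dot n y != 0 by move: v0; rewrite vv mulf_eq0 negb_or => /andP[].
have -> : 2 / s * dot n v = 1 by rewrite /s vv nv; field.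
by rewrite scale1r /v opprB addrC subrK.
Qed.
End HH.

Section Net.
Variable R : realType.

Lemma grid_pt (N m : nat) (x : R) : (0 < m)%N -> `|x| <= N%:R ->
  exists j : 'I_(2 * (m * N)).+1,
    0 <= x - ((j : nat)%:R - (m * N)%:R) / m%:R <= m%:R^-1.
Proof.
move=> m0 hx.
have mr0 : (0 : R) < m%:R by rewrite ltr0n.
set w := m%:R * x + (m * N)%:R.
have w0 : 0 <= w.
  rewrite /w natrM addrC -mulrDr mulr_ge0 ?ler0n // -lerBlDl sub0r.
  by move: hx; rewrite ler_norml => /andP[].
have w2 : w <= (2 * (m * N))%:R.
  have -> : ((2 * (m * N))%:R : R) = m%:R * N%:R + m%:R * N%:R by rewrite !natrM; ring.
  rewrite /w natrM lerD2r ler_wpM2l ?ler0n //.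
  by move: hx; rewrite ler_norml => /andP[].
have [t1 t2] := andP (truncn_itv w0). rewrite -natr1 in t2.
have jlt : (Num.trunc w < (2 * (m * N)).+1)%N.
  by rewrite ltnS truncn_le_nat (le_lt_trans w2) // ltr_nat.
exists (Ordinal jlt) => /=.
have -> : x - ((Num.trunc w)%:R - (m * N)%:R) / m%:R = (w - (Num.trunc w)%:R) / m%:R.
  by rewrite /w; field; rewrite gt_eqF.
rewrite divr_ge0 ?subr_ge0 ?ler0n //= ler_pdivrMr // mulVf ?gt_eqF //.
by rewrite lerBlDl ltW.
Qed.

Lemma coord_le (N : nat) (x : 'rV[R]_N) i : sphere N x -> (0 < N)%N ->
  `|x ord0 i| <= N%:R.
Proof.
move=> /sphere_dot xx N0.
have h : x ord0 i ^+ 2 <= N%:R.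
  rewrite -xx /dot (bigD1 i) //= expr2 lerDl sumr_ge0 // => j _.
  by rewrite -expr2 sqr_ge0.
have N1 : (1 : R) <= N%:R by rewrite ler1n.
rewrite ler_norml; apply/andP; split; nra.
Qed.

Lemma overlap_ineq (n t p e2 : R) : 0 < n -> 0 < t -> 0 <= e2 -> e2 <= 4^-1 ->
  n ^+ 2 - 2 * p + t ^+ 2 <= n ^+ 2 * e2 -> (1 - e2) * (n * t) <= p.
Proof.
move=> n0 t0 e0 e4 h.
have key : 0 <= (n - t) ^+ 2 + e2 * n * (2 * t - n).
  case: (lerP n (2 * t)) => c.
    by rewrite addr_ge0 ?sqr_ge0 // mulr_ge0 ?mulr_ge0 ?subr_ge0 // ltW.
  have h1 : n ^+ 2 <= 4 * (n - t) ^+ 2.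
    have : n <= 2 * (n - t) by lra.
    move=> h2; have : n ^+ 2 <= (2 * (n - t)) ^+ 2.
      by rewrite lerXn2r ?nnegrE //; lra.
    by rewrite exprMn; lra.
  have h3 : e2 * (n - 2 * t) <= 4^-1 * n.
    apply: (@le_trans _ _ (4^-1 * (n - 2 * t))); first by rewrite ler_wpM2r //; lra.
    by rewrite ler_wpM2l //; lra.
  have h4 : e2 * n * (n - 2 * t) <= 4^-1 * n ^+ 2.
    by rewrite -mulrA [n * _]mulrC mulrA expr2 mulrA ler_wpM2r //; lra.
  have -> : e2 * n * (2 * t - n) = - (e2 * n * (n - 2 * t)) by ring.
  lra.
nra.
Qed.

Lemma net (al : R) : 0 < al -> exists B : nat, forall N : nat, (0 < N)%N ->
  exists (s : seq 'rV[R]_N) (L : nat), [/\ (L <= 7 * N ^ B)%N, size s = (L ^ N)%N,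
  (forall y, y \in s -> sphere N y) &
  (forall x, sphere N x -> exists2 y, y \in s & 1 - N%:R `^ (- al) <= overlap x y)].
Proof.
move=> al0.
set A := Num.Def.archi_bound al.
have alA : al < A%:R by apply: archi_boundP; apply: ltW.
exists A.+1 => N N0.
set m := (2 * N ^ A)%N.
have m0 : (0 < m)%N by rewrite muln_gt0 expn_gt0 N0.
set M := (m * N)%N.
pose L := (2 * M).+1.
pose zf (g : {ffun 'I_N -> 'I_L}) : 'rV[R]_N :=
  \row_i (((g i : nat)%:R - M%:R) / m%:R).
pose yf g := if 0 < dot (zf g) (zf g)
  then (Num.sqrt N%:R / Num.sqrt (dot (zf g) (zf g))) *: zf g else npole N.
exists (map yf (enum {ffun 'I_N -> 'I_L})), L.
split.
  rewrite /L /M /m expnS -mulnA [(N * N ^ A)%N]mulnC.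
  have : (0 < N ^ A * N)%N by rewrite muln_gt0 expn_gt0 N0.
  move: (N ^ A * N)%N => X; lia.
  by rewrite size_map -cardE card_ffun !card_ord.
  move=> _ /mapP[g _ ->]; rewrite /yf.
  case: ifP => b0; last exact: npole_sphere.
  apply/sphere_dot; rewrite dotZl dotZr mulrA -expr2 expr_div_n !sqr_sqrtr ?ler0n ?ltW //.
  by rewrite divfK ?gt_eqF.
move=> x xs.
pose P i (j : 'I_L) := (0 <= x ord0 i - ((j : nat)%:R - M%:R) / m%:R <= m%:R^-1).
pose g := [ffun i => odflt ord0 [pick j | P i j]].
have gP i : P i (g i).
  rewrite ffunE; case: pickP => [j Pj //|none].
  have [j Pj] := grid_pt m0 (coord_le i xs N0).
  by have := none j; rewrite /P Pj.
exists (yf g); first by apply: map_f; rewrite mem_enum.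
set z := zf g.
have ez i : 0 <= x ord0 i - z ord0 i <= m%:R^-1 by rewrite /z /zf mxE; exact: gP.
have mr : (2 : R) <= m%:R.
  by rewrite /m natrM ler_peMr ?ler0n // ler1n expn_gt0 N0.
have mr0 : (0 : R) < m%:R by rewrite ltr0n.
pose e2 : R := m%:R^-1 ^+ 2.
have e20 : 0 <= e2 by rewrite sqr_ge0.
have e24 : e2 <= 4^-1.
  rewrite /e2 exprVn lef_pV2 ?posrE ?exprn_gt0 //.
  have -> : (4 : R) = 2 ^+ 2 by rewrite expr2; ring.
  by rewrite lerXn2r ?nnegrE ?ler0n // ltW.
have q : dot (x - z) (x - z) <= N%:R * e2.
  rewrite /dot.
  apply: (@le_trans _ _ (\sum_(i < N) e2)); last by rewrite sumr_const card_ord mulr_natl.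
  apply: ler_sum => i _; rewrite !mxE -expr2 /e2.
  have := ez i; rewrite /z /zf mxE => /andP[h1 h2].
  by rewrite lerXn2r // nnegrE ?invr_ge0 ?ler0n.
have /sphere_dot xx := xs.
have Nr0 : (0 : R) < N%:R by rewrite ltr0n.
have b0 : 0 < dot z z.
  rewrite lt_def dot_ge0 andbT; apply/negP => /eqP /dot0 z0.
  have : dot (x - z) (x - z) = N%:R.
    by rewrite -xx; apply: eq_bigr => i _; rewrite mxE [(- z) _ _]mxE z0 subr0.
  move=> h; move: q; rewrite h; nra.
have -> : yf g = (Num.sqrt N%:R / Num.sqrt (dot z z)) *: z by rewrite /yf -/z b0.
have -> : overlap x ((Num.sqrt N%:R / Num.sqrt (dot z z)) *: z) =
    (Num.sqrt N%:R / Num.sqrt (dot z z)) * dot x z / N%:R.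
  by rewrite /overlap -/(dot _ _) dotZr.
have qe : dot (x - z) (x - z) = N%:R - 2 * dot x z + dot z z.
  by rewrite dotBl !dotBr xx (dotC z x); ring.
have eN : e2 <= N%:R `^ (- al).
  rewrite powRN /e2 exprVn lef_pV2 ?posrE ?exprn_gt0 ?powR_gt0 //.
  apply: (@le_trans _ _ (N%:R `^ A%:R)).
    by apply: ler_powR; [rewrite ler1n | exact: ltW].
  rewrite powR_mulrn ?ler0n // /m natrM natrX expr2.
  rewrite -[X in X <= _]mul1r mulrA ler_wpM2r ?exprn_ge0 ?ler0n //.
  have h : (1 : R) <= N%:R ^+ A by rewrite exprn_ege1 // ler1n.
  nra.
apply: (@le_trans _ _ (1 - e2)); first by rewrite lerB.
set n := Num.sqrt (N%:R : R); set t := Num.sqrt (dot z z).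
have n0 : 0 < n by rewrite sqrtr_gt0.
have t0 : 0 < t by rewrite sqrtr_gt0.
have nN : N%:R = n ^+ 2 by rewrite sqr_sqrtr ?ler0n.
have tb : dot z z = t ^+ 2 by rewrite sqr_sqrtr // ltW.
have := overlap_ineq (p := dot x z) n0 t0 e20 e24.
rewrite -nN -tb -qe => /(_ q) h.
rewrite nN ler_pdivlMr ?exprn_gt0 // mulrAC ler_pdivlMr //.
apply: le_trans (ler_wpM2l (ltW n0) h); rewrite le_eqVlt; apply/orP; left; apply/eqP; ring.
Qed.

End Net.

Unset Implicit Arguments. Set Strict Implicit.

Section Main.
Variables (R : realType) (d : measure_display) (T : measurableType d) (P : probability T R).

Lemma tail_meas (t m : R) : measurable [set r : R | t <= `|r - m|].
Proof.
have -> : [set r : R | t <= `|r - m|] = `]-oo, (m - t)] `|` `[(m + t), +oo[.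
  apply/seteqP; split => r /=.
    rewrite ler_normr => /orP[h|h]; [right|left]; rewrite /= in_itv /= ?andbT; lra.
  by move=> [|]; rewrite /= in_itv /= ?andbT => h; rewrite ler_normr; apply/orP; [right|left]; lra.
by apply: measurableU; apply: measurable_itv.
Qed.

Lemma tail_iso (N : nat) (F : 'rV[R]_N -> T -> R) (t m : R) (y : 'rV[R]_N) :
  (0 < N)%N -> random_field F -> isotropic P F -> sphere N y ->
  measurable [set w | t <= `|F y w - m|] /\
  P [set w | t <= `|F y w - m|] = P [set w | t <= `|F (npole N) w - m|].
Proof.
move=> N0 rf iso ys; split.
  have := rf y ys measurableT _ (tail_meas t m); rewrite setTI; exact.
have [Om [oO nO]] := householder N0 ys.
have := iso Om oO 1%N (fun _ => npole N) (fun _ => [set r | t <= `|r - m|])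
  (fun _ => @npole_sphere R N N0) (fun _ => tail_meas t m).
rewrite nO => h.
have e1 : forall (z : 'rV[R]_N), [set w | forall i : 'I_1, t <= `|F z w - m|] = [set w | t <= `|F z w - m|].
  move=> z; apply/seteqP; split => w /=; first by apply; exact: ord0.
  by move=> h' _.
by move: h; rewrite !e1.
Qed.

Lemma exp_comb1 (L N : nat) (C c f e : R) : 0 < c -> f <= c / 2 -> 0 <= e ->
  L%:R ^+ N <= expR (c / 2 * e) ->
  (L ^ N)%:R * (C * expR (- c * e)) <= `|C| * expR (- f * e).
Proof.
move=> c0 fc e0 hL.
rewrite natrX mulrCA.
apply: (@le_trans _ _ (`|C| * (L%:R ^+ N * expR (- c * e)))).
  rewrite ler_wpM2r ?mulr_ge0 ?exprn_ge0 ?expR_ge0 ?ler0n ?ler_norm //.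
rewrite ler_wpM2l //.
apply: (@le_trans _ _ (expR (c / 2 * e) * expR (- c * e))).
  by rewrite ler_wpM2r ?expR_ge0.
rewrite -expRD ler_expR.
have : f * e <= c / 2 * e by rewrite ler_wpM2r.
lra.
Qed.

Lemma exp_comb2 (C c f e : R) : f <= c -> 0 <= e ->
  C * expR (- c * e) <= `|C| * expR (- f * e).
Proof.
move=> fc e0.
apply: (@le_trans _ _ (`|C| * expR (- c * e))).
  by rewrite ler_wpM2r ?expR_ge0 ?ler_norm.
rewrite ler_wpM2l // ler_expR.
have : f * e <= c * e by rewrite ler_wpM2r.
lra.
Qed.

Lemma powR_beta (N : nat) (dl : R) : (0 < N)%N ->
  N%:R `^ (1 + 2 * dl) = (N%:R `^ (2^-1 + dl)) ^+ 2 /\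
  N%:R `^ (2^-1 + dl) = Num.sqrt N%:R * N%:R `^ dl.
Proof.
move=> N0; split.
  have -> : 1 + 2 * dl = (2^-1 + dl) * 2%:R by field.
  by rewrite powRrM powR_mulrn // powR_ge0.
rewrite powRD; last by apply/implyP => _; rewrite pnatr_eq0 -lt0n.
by rewrite powR12_sqrt ?ler0n.
Qed.

End Main.

Theorem mainTheorem12 (R : realType) (d : measure_display) (T : measurableType d)
  (P : probability T R) (F : forall N : nat, 'rV[R]_N -> T -> R) :
  (forall N, (0 < N)%N -> random_field (F N)) ->
  (forall N, (0 < N)%N -> isotropic P (F N)) ->
  (forall N, (0 < N)%N -> as_continuous P (F N)) ->
  (forall N, (0 < N)%N -> P.-integrable setT (fun w => (F N (npole N) w)%:E)) ->
  (* hypothesis (1) *)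
  let H1 := forall c : R, 0 < c -> exists c1 : R, 0 < c1 /\
      forall delta : R, 0 < delta -> exists C : R, forall N : nat, (0 < N)%N ->
        (outerP P [set w | (c * N%:R `^ (2^-1 + delta) <=
                            `|F N (npole N) w - mean_pole P (F N)|)%R] <=
         (C * expR (- c1 * N%:R `^ (1 + 2 * delta)))%:E)%E in
  (* hypothesis (2) *)
  let H2 := exists alpha : R, 0 < alpha /\ forall c : R, 0 < c ->
      exists c2 : R, 0 < c2 /\
      forall delta : R, 0 < delta -> exists C : R, forall N : nat, (0 < N)%N ->
        (outerP P [set w | ((c * N%:R `^ (2^-1 + delta))%:E <=
                            sup_close alpha (F N) w)%E] <=
         (C * expR (- c2 * N%:R `^ (1 + 2 * delta)))%:E)%E in
  (* hypothesis (2') *)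
  let H2' := exists alpha : R, 0 < alpha /\ forall c : R, 0 < c ->
      exists c2 : R, 0 < c2 /\
      forall delta : R, 0 < delta -> exists C : R, forall N : nat, (0 < N)%N ->
        (outerP P [set w | ((c * N%:R `^ (1 + 2 * delta))%:E <=
                            sup_close alpha (fun x w => (F N x w ^+ 2)%R) w)%E] <=
         (C * expR (- c2 * N%:R `^ (1 + 2 * delta)))%:E)%E in
  (H1 -> H2 ->
    forall c : R, 0 < c -> exists f : R, 0 < f /\
      forall delta : R, 0 < delta -> exists C : R, forall N : nat, (0 < N)%N ->
        (outerP P [set w | ((c * N%:R `^ (2^-1 + delta))%:E <=
            sup_sphere (fun x w => `|F N x w - mean_pole P (F N)|%R) w)%E] <=
         (C * expR (- f * N%:R `^ (1 + 2 * delta)))%:E)%E)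
  /\
  ((forall N, (0 < N)%N ->
      {ae P, forall w, forall x, sphere N x -> 0 <= F N x w}) ->
   (exists K : R, forall N, (0 < N)%N ->
      `|mean_pole P (F N)| <= K * Num.sqrt (N%:R)) ->
   H1 -> H2' ->
    forall c : R, 0 < c -> exists f : R, 0 < f /\
      forall delta : R, 0 < delta -> exists C : R, forall N : nat, (0 < N)%N ->
        (outerP P [set w | ((c * N%:R `^ (2^-1 + delta))%:E <=
            sup_sphere (F N) w)%E] <=
         (C * expR (- f * N%:R `^ (1 + 2 * delta)))%:E)%E).

Proof.
move=> Hrf Hiso Hcont Hint; cbv zeta.
split.
  move=> h1 [al [al0 h2]] c c0.
  have [c1 [c10 hc1]] := h1 (c / 4) ltac:(lra).
  have [c2 [c20 hc2]] := h2 (c / 2) ltac:(lra).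
  have [B hnet] := net al0.
  have f0 : 0 < Num.min c1 c2 / 2 by rewrite divr_gt0 // lt_min c10 c20.
  exists (Num.min c1 c2 / 2); split => // dl dl0.
  have [C1 hC1] := hc1 dl dl0; have [C2 hC2] := hc2 dl dl0.
  have [N0 hN0] := @ev_count R (c1 / 2) dl B ltac:(lra) dl0.
  apply: (@ev_unif _ _ _ P _ _ (1 + 2 * dl) (`|C1| + `|C2|) N0); [lra|lra|].
  move=> N hN N0'.
  set m := mean_pole P (F N).
  set be := N%:R `^ (2^-1 + dl).
  have be0 : 0 < be by rewrite powR_gt0 // ltr0n.
  have [s [L [hL hs hsph hcov]]] := hnet N N0'.
  set A := fun y => [set w | c / 4 * be <= `|F N y w - m|].
  set Cl := [set w | (c / 2 * be)%:E <= sup_close al (F N) w]%E.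
  have hA : forall y, y \in s -> measurable (A y) /\
      (P (A y) <= (C1 * expR (- c1 * N%:R `^ (1 + 2 * dl)))%:E)%E.
    move=> y ys.
    have [mA eA] := @tail_iso _ _ _ P N (F N) (c / 4 * be) m y N0' (Hrf N N0') (Hiso N N0') (hsph y ys).
    have [mA' _] := @tail_iso _ _ _ P N (F N) (c / 4 * be) m (npole N) N0' (Hrf N N0') (Hiso N N0') (@npole_sphere R N N0').
    split => //; rewrite /A eA; exact: le_trans (@P_le_outerP _ _ _ P _ mA') (hC1 N N0').
  have [mU PU] := @union_bound _ _ _ P _ s A _ hA.
  apply: le_trans (@outerP_split _ _ _ P _ _ Cl mU _) _.
    move=> w /= hw.
    have : (((3 * c / 4) * be)%:E < sup_sphere (fun x w => `|F N x w - m|%R) w)%E.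
      by apply: lt_le_trans hw; rewrite lte_fin ltr_pM2r //; lra.
    move=> /ereal_sup_gt [_ [x xs <-]]; rewrite lte_fin => hx.
    have [y ys hov] := hcov x xs.
    case: (lerP (c / 2 * be) `|F N x w - F N y w|) => hxy.
      right; rewrite /Cl /=.
      apply: (@le_trans _ _ ((`|F N x w - F N y w|)%:E)); first by rewrite lee_fin.
      apply: ereal_sup_ubound; exists (x, y) => //=; split => //; split => //.
      exact: hsph.
    left; apply: (@in_union _ _ _ s A y w ys); rewrite /A /=.
    have := ler_normD (F N x w - F N y w) (F N y w - m).
    have -> : F N x w - F N y w + (F N y w - m) = F N x w - m by ring.
    lra.
  apply: le_trans (leeD PU (hC2 N N0')) _.
  rewrite -EFinD lee_fin hs [(`|C1| + _) * _]mulrDl.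
  have e0 : 0 <= N%:R `^ (1 + 2 * dl) by apply: powR_ge0.
  apply: lerD.
    apply: exp_comb1 => //; last exact: hN0.
    rewrite ler_pM2r ?ge_min ?lexx //.
  apply: exp_comb2 => //.
  rewrite ler_pdivrMr // ge_min; apply/orP; right; lra.
move=> _ [K hK] h1 [al [al0 h2]] c c0.
have [c1 [c10 hc1]] := h1 (c / 4) ltac:(lra).
have [c2 [c20 hc2]] := h2 (5 * c ^+ 2 / 16) ltac:(by rewrite divr_gt0 // mulr_gt0 // exprn_gt0).
have [B hnet] := net al0.
have f0 : 0 < Num.min c1 c2 / 2 by rewrite divr_gt0 // lt_min c10 c20.
exists (Num.min c1 c2 / 2); split => // dl dl0.
have [C1 hC1] := hc1 dl dl0; have [C2 hC2] := hc2 dl dl0.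
have [N0 hN0] := @ev_count R (c1 / 2) dl B ltac:(lra) dl0.
have [N1 hN1] := @ev_pow R dl (4 * K / c) dl0.
apply: (@ev_unif _ _ _ P _ _ (1 + 2 * dl) (`|C1| + `|C2|) (maxn N0 N1)); [lra|lra|].
move=> N; rewrite geq_max => /andP[hN hN1'] N0'.
set m := mean_pole P (F N).
set be := N%:R `^ (2^-1 + dl).
have be0 : 0 < be by rewrite powR_gt0 // ltr0n.
have [gam bsq] := @powR_beta R N dl N0'.
have mle : `|m| <= c / 4 * be.
  apply: (le_trans (hK N N0')); rewrite /be bsq.
  have := hN1 N hN1'; rewrite ler_pdivrMr // => h.
  have sq0 : 0 <= Num.sqrt (N%:R : R) by apply: sqrtr_ge0.
  have : K * Num.sqrt N%:R <= (N%:R `^ dl * c / 4) * Num.sqrt N%:R.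
    by rewrite ler_wpM2r //; lra.
  move=> h'; apply: (le_trans h'); rewrite le_eqVlt; apply/orP; left; apply/eqP; ring.
have [s [L [hL hs hsph hcov]]] := hnet N N0'.
set A := fun y => [set w | c / 4 * be <= `|F N y w - m|].
set Cl := [set w | ((5 * c ^+ 2 / 16) * N%:R `^ (1 + 2 * dl))%:E <=
   sup_close al (fun x w => (F N x w ^+ 2)%R) w]%E.
have hA : forall y, y \in s -> measurable (A y) /\
    (P (A y) <= (C1 * expR (- c1 * N%:R `^ (1 + 2 * dl)))%:E)%E.
  move=> y ys.
  have [mA eA] := @tail_iso _ _ _ P N (F N) (c / 4 * be) m y N0' (Hrf N N0') (Hiso N N0') (hsph y ys).
  have [mA' _] := @tail_iso _ _ _ P N (F N) (c / 4 * be) m (npole N) N0' (Hrf N N0') (Hiso N N0') (@npole_sphere R N N0').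
  split => //; rewrite /A eA; exact: le_trans (@P_le_outerP _ _ _ P _ mA') (hC1 N N0').
have [mU PU] := @union_bound _ _ _ P _ s A _ hA.
apply: le_trans (@outerP_split _ _ _ P _ _ Cl mU _) _.
  move=> w /= hw.
  have : (((3 * c / 4) * be)%:E < sup_sphere (F N) w)%E.
    by apply: lt_le_trans hw; rewrite lte_fin ltr_pM2r //; lra.
  move=> /ereal_sup_gt [_ [x xs <-]]; rewrite lte_fin => hx.
  have [y ys hov] := hcov x xs.
  case: (lerP ((5 * c ^+ 2 / 16) * N%:R `^ (1 + 2 * dl)) `|F N x w ^+ 2 - F N y w ^+ 2|) => hxy.
    right; rewrite /Cl /=.
    apply: (@le_trans _ _ ((`|F N x w ^+ 2 - F N y w ^+ 2|)%:E)); first by rewrite lee_fin.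
    apply: ereal_sup_ubound; exists (x, y) => //=; split => //; split => //.
    exact: hsph.
  left; apply: (@in_union _ _ _ s A y w ys); rewrite /A /=.
  rewrite leNgt; apply/negP => hy.
  have := ler_normD (F N y w - m) m.
  have -> : F N y w - m + m = F N y w by ring.
  move=> hFy.
  have hFy2 : `|F N y w| < c / 2 * be by lra.
  have sy : F N y w ^+ 2 < (c / 2 * be) ^+ 2.
    by rewrite -real_normK ?num_real // ltrXn2r ?nnegrE ?normr_ge0 //; nra.
  have sx : (3 * c / 4 * be) ^+ 2 <= F N x w ^+ 2.
    by rewrite lerXn2r ?nnegrE //; nra.
  move: hxy; rewrite gam => hxy.
  have := ler_norm (F N x w ^+ 2 - F N y w ^+ 2).
  have e : (3 * c / 4 * be) ^+ 2 - (c / 2 * be) ^+ 2 = 5 * c ^+ 2 / 16 * be ^+ 2 by field.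
  move=> hn; rewrite -/be in hxy; lra.
apply: le_trans (leeD PU (hC2 N N0')) _.
rewrite -EFinD lee_fin hs [(`|C1| + _) * _]mulrDl.
have e0 : 0 <= N%:R `^ (1 + 2 * dl) by apply: powR_ge0.
apply: lerD.
  apply: exp_comb1 => //; last exact: hN0.
  rewrite ler_pM2r ?ge_min ?lexx //.
apply: exp_comb2 => //.
rewrite ler_pdivrMr // ge_min; apply/orP; right; lra.
Qed.
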